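(* Assume the standing assumptions in the context. Let $S\subsetneq S^*$ and $k=|S|$. Then $$\inf_{\alpha\in\mathbb{R},\,i\in S^*\setminus S}\mathbb{E}\Big[\big(x^\top\beta^S+\alpha\beta^*_ix_i-y\big)^2\Big]\le\mathbb{E}\big[(x^\top\beta^S-y)^2\big]-\frac{1}{s^*-k}\,\frac{\rho}{L}\,\mathbb{E}\Big[\big(x^\top(\beta^*-\beta^S)\big)^2\Big].$$
   Context: Standing assumptions: $(x,y)$ random with $x\in\mathbb{R}^d$, $y\in\mathbb{R}$; $\mathbb{E}[x]=0$; $y=\langle\beta^*,x\rangle+\epsilon$ with $\mathbb{E}[\epsilon\mid x]=0$; $S^*=\mathrm{supp}(\beta^* )$, $s^*=|S^*|$; $\Sigma$ the covariance of $x$, $\Sigma_F$ its principal submatrix on $F$; there are $0<\rho\le L$ with all eigenvalues of $\Sigma_F$ in $[\rho,L]$ for all $|F|=s^*$; for $|F|=s^*$, $\mu_F:=\max_{j\notin F}\|\Sigma_F^{-1}\mathrm{Cov}(x_F,x_j)\|_1<1$; $|y|<1$ and $\|x\|_\infty<M$ almost surely. $\mathcal{R}(\beta)=\mathbb{E}[(y-\langle x,\beta\rangle)^2]$ and $\beta^S=\arg\min_{\mathrm{supp}(\beta)\subseteq S}\mathcal{R}(\beta)$. *)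

(* Defs.v *)
From HB Require Import structures.
From mathcomp Require Import all_boot all_order all_algebra.
From mathcomp Require Import all_classical all_reals all_analysis.
Set Implicit Arguments. Unset Strict Implicit. Unset Printing Implicit Defensive.
Import Order.TTheory GRing.Theory Num.Theory.
Local Open Scope classical_set_scope.
Local Open Scope ring_scope.

Section Defs.
Context (d : measure_display) (T : measurableType d) (R : realType)
  (P : probability T R) (n : nat).

(* real-valued expectation (all variables here are bounded, so finite) *)
Definition Ex (f : T -> R) : R := fine ('E_P[f])%E.

Definition ip (x : 'I_n -> T -> R) (b : 'I_n -> R) (w : T) : R :=
  \sum_(j < n) b j * x j w.

Definition supp (b : 'I_n -> R) : {set 'I_n} := [set i | b i != 0].

Definition Sigma (x : 'I_n -> T -> R) : 'M[R]_n :=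
  \matrix_(i, j) fine (covariance P (x i) (x j)).

Definition SigmaF (x : 'I_n -> T -> R) (F : {set 'I_n}) : 'M[R]_#|F| :=
  \matrix_(a, b) Sigma x (enum_val a) (enum_val b).

Definition CovFj (x : 'I_n -> T -> R) (F : {set 'I_n}) (j : 'I_n) : 'cV[R]_#|F| :=
  \col_a Sigma x (enum_val a) j.

Definition norm1 m (v : 'cV[R]_m) : R := \sum_(a < m) `|v a 0|.

Definition muF (x : 'I_n -> T -> R) (F : {set 'I_n}) : R :=
  \big[Num.max/0]_(j | j \notin F) norm1 (invmx (SigmaF x F) *m CovFj x F j).

Definition risk (x : 'I_n -> T -> R) (y : T -> R) (b : 'I_n -> R) : R :=
  Ex (fun w => (y w - ip x b w) ^+ 2).

Definition is_betaS (x : 'I_n -> T -> R) (y : T -> R) (S : {set 'I_n})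
  (b : 'I_n -> R) : Prop :=
  supp b \subset S /\
  forall b' : 'I_n -> R, supp b' \subset S -> risk x y b <= risk x y b'.

Definition sigma_x (x : 'I_n -> T -> R) : set (set T) :=
  <<s \bigcup_(j in [set: 'I_n]) [set x j @^-1` B | B in measurable] >>.

(* E[eps | x] = 0 : E[eps 1_A] = 0 for every A in sigma(x) *)
Definition cond_exp_zero (x : 'I_n -> T -> R) (eps : T -> R) : Prop :=
  forall A, sigma_x x A -> (\int[P]_(w in A) (eps w)%:E = 0)%E.

End Defs.

(* Main.v *)
Require Import Defs.
From HB Require Import structures.
From mathcomp Require Import all_boot all_order all_algebra.
From mathcomp Require Import all_classical all_reals all_analysis.
From mathcomp Require Import measurable_realfun ring lra.
From mathcomp Require Import complex.
Import Order.TTheory GRing.Theory Num.Theory.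
Set Implicit Arguments. Unset Strict Implicit. Unset Printing Implicit Defensive.
Local Open Scope classical_set_scope.
Local Open Scope ring_scope.

Section S.
Variable R : realType.
Local Open Scope complex_scope.
Local Notation f := (real_complex R).

Lemma mapC_real m k (A : 'M[R]_(m,k)) : map_mx f A \is a realmx.
Proof. by apply/mxOverP => i j; rewrite mxE; apply/complex_realP; eexists. Qed.

Lemma mapC_conj m k (A : 'M[R]_(m,k)) : map_mx Num.conj (map_mx f A) = map_mx f A.
Proof. by apply/matrixP => i j; rewrite !mxE; exact: conjc_real. Qed.

Lemma eig_real m (A : 'M[R]_m) (c : R) : eigenvalue (map_mx f A) (f c) -> eigenvalue A c.
Proof.
by rewrite !eigenvalue_root_char -map_char_poly fmorph_root.
Qed.

Lemma quad_bounds m (A : 'M[R]_m) (rho L : R) :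
  A^T = A -> (forall a, eigenvalue A a -> rho <= a <= L) ->
  forall u : 'rV[R]_m,
  rho * (u *m u^T) 0 0 <= (u *m A *m u^T) 0 0 <= L * (u *m u^T) 0 0.
Proof.
move=> Asym Aeig u.
set AC := map_mx f A.
have ACsym : AC \is symmetricmx.
  apply/is_hermitianmxP; rewrite expr0 scale1r; apply/matrixP => i j; rewrite !mxE -[in LHS]Asym mxE. done.
have ACreal := mapC_real A.
have ACn : AC \is normalmx := symmetric_normalmx ACsym ACreal.
have ACh : AC \is hermsymmx := realsym_hermsym ACsym ACreal.
have := (orthomx_spectralP ACn).
set Pm := spectralmx AC; set dg := spectral_diag AC => ACE.
have Pu : Pm \is unitarymx by apply: spectral_unitarymx.
have dreal : dg \is a realmx by apply: hermitian_spectral_diag_real.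
rewrite invmx_unitary // in ACE.
have dgE k : dg 0 k = f (complex.Re (dg 0 k)).
  by rewrite RRe_real //; apply: (mxOverP dreal).
have dgB k : rho <= complex.Re (dg 0 k) <= L.
  apply: Aeig; apply: eig_real; rewrite -dgE.
  apply/eigenvalueP; exists (delta_mx 0 k *m Pm).
    rewrite -/AC ACE !mulmxA mulmxtVK // scalemxAl; congr (_ *m _).
    apply/matrixP => i j; rewrite mul_mx_diag !mxE (ord1 i) eqxx /=.
    by case: eqP => [->|]; rewrite ?mulr1 ?mulr0 ?mul1r ?mul0r.
  rewrite mulmx_free_eq0 ?row_free_unit ?unitarymx_unit //.
  by apply/negP => /eqP/matrixP/(_ 0 k); rewrite !mxE !eqxx; apply/eqP; exact: oner_neq0.
set uC := map_mx f u.
have tCM p q r (X : 'M[R[i]]_(p,q)) (Y : 'M[R[i]]_(q,r)) :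
    ((X *m Y)^t* = Y^t* *m X^t*)%sesqui by rewrite trmx_mul map_mxM.
have uCt : (uC^t* = uC^T)%sesqui.
  by apply/matrixP => a b; rewrite !mxE; exact: conjc_real.
have mf p q (X : 'M[R]_(p,q)) a b : f (X a b) = map_mx f X a b by rewrite mxE.
set w := uC *m Pm^t*%sesqui.
have wt : (w^t* = Pm *m uC^T)%sesqui by rewrite tCM trmxCK uCt.
have e1 : f ((u *m A *m u^T) 0 0) = (w *m diag_mx dg *m w^t*%sesqui) 0 0.
  by rewrite mf !map_mxM -/AC ACE wt !mulmxA map_trmx.
have e2 : f ((u *m u^T) 0 0) = (w *m w^t*%sesqui) 0 0.
  by rewrite mf !map_mxM wt mulmxA mulmxKtV // map_trmx.
have E1 : (w *m diag_mx dg *m w^t*%sesqui) 0 0 =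
    \sum_k dg 0 k * (w 0 k * (w 0 k)^*%R).
  rewrite mxE; apply: eq_bigr => k _; rewrite mul_mx_diag !mxE.
  by rewrite mulrAC mulrC.
have E2 : (w *m w^t*%sesqui) 0 0 = \sum_k (w 0 k * (w 0 k)^*%R).
  by rewrite mxE; apply: eq_bigr => k _; rewrite !mxE.
have ge k : 0 <= w 0 k * (w 0 k)^*%R by apply: mul_conjC_ge0.
apply/andP; split; rewrite -lecR rmorphM /= e1 e2 E1 E2 mulr_sumr;
  apply: ler_sum => k _.
  by rewrite ler_wpM2r // dgE lecR; case/andP: (dgB k).
by rewrite ler_wpM2r // dgE lecR; case/andP: (dgB k).
Qed.
End S.

Section Integ.
Context (d : measure_display) (T : measurableType d) (R : realType)
  (P : probability T R).

Lemma Pint_cst (c : R) : (\int[P]_(w in setT) (cst c%:E) w = c%:E)%E.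
Proof.
rewrite integral_cst //.
by rewrite [X in (_ * X)%E](_ : _ = 1%E) ?mule1 //; exact: probability_setT.
Qed.

Definition bnd (f : T -> R) := measurable_fun setT f /\
  exists C : R, {ae P, forall w, `|f w| <= C}.

Lemma bnd_int f : bnd f -> P.-integrable setT (EFin \o f).
Proof.
move=> [mf [C hC]]; apply/integrableP; split; first exact/measurable_EFinP.
apply: (@le_lt_trans _ _ (\int[P]_(w in setT) (cst (Num.max C 0)%:E) w)%E).
  apply: ae_ge0_le_integral => //.
  - by apply/measurable_EFinP; apply: measurableT_comp.
  - by move=> w _ /=; rewrite lee_fin le_max lexx orbT.
  - apply: filterS hC => w hw _ /=; rewrite lee_fin (le_trans hw) //.
    by rewrite le_max lexx.
by rewrite Pint_cst ltry.
Qed.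

Lemma ExE f : Ex P f = fine (\int[P]_w (f w)%:E)%E.
Proof. by rewrite /Ex unlock. Qed.

Lemma Ex_EFin f : bnd f -> ((Ex P f)%:E = \int[P]_w (f w)%:E)%E.
Proof. by move=> bf; rewrite ExE fineK // integrable_fin_num //; exact: bnd_int. Qed.

Lemma ExD f g : bnd f -> bnd g -> Ex P (fun w => f w + g w) = Ex P f + Ex P g.
Proof.
move=> bf bg; rewrite ExE.
have -> : (\int[P]_w (f w + g w)%:E = \int[P]_w ((EFin \o f) \+ (EFin \o g)) w)%E by [].
by rewrite integralD_EFin //; [rewrite -!Ex_EFin //|exact: bnd_int|exact: bnd_int].
Qed.

Lemma ExZ k f : bnd f -> Ex P (fun w => k * f w) = k * Ex P f.
Proof.
move=> bf; rewrite ExE.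
have -> : (\int[P]_w (k * f w)%:E = \int[P]_w (k%:E * (EFin \o f) w))%E by [].
by rewrite integralZl //; [rewrite -Ex_EFin //|exact: bnd_int].
Qed.

Lemma Ex_cst k : Ex P (fun _ => k) = k.
Proof. by rewrite ExE (Pint_cst k). Qed.

Lemma Ex_ge0 f : (forall w, 0 <= f w) -> 0 <= Ex P f.
Proof.
move=> f0; rewrite ExE; apply: fine_ge0; apply: integral_ge0 => w _.
by rewrite lee_fin.
Qed.

Lemma ae_and (A B : T -> Prop) : {ae P, forall w, A w} -> {ae P, forall w, B w} ->
  {ae P, forall w, A w /\ B w}.
Proof. by move=> hA hB; apply: filterS2 hA hB => w. Qed.

Lemma bnd_cst k : bnd (fun _ => k).
Proof. by split; [exact: measurable_cst | exists `|k|; apply: aeW => w]. Qed.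

Lemma bndD f g : bnd f -> bnd g -> bnd (fun w => f w + g w).
Proof.
move=> [mf [C hC]] [mg [D hD]]; split; first exact: measurable_funD.
exists (C + D); apply: filterS2 hC hD => w h1 h2.
by rewrite (le_trans (ler_normD _ _)) // lerD.
Qed.

Lemma bndM f g : bnd f -> bnd g -> bnd (fun w => f w * g w).
Proof.
move=> [mf [C hC]] [mg [D hD]]; split; first exact: measurable_funM.
exists (C * D); apply: filterS2 hC hD => w h1 h2.
by rewrite normrM ler_pM.
Qed.

Lemma bndZ k f : bnd f -> bnd (fun w => k * f w).
Proof. by move=> bf; apply: bndM => //; exact: bnd_cst. Qed.

Lemma bndB f g : bnd f -> bnd g -> bnd (fun w => f w - g w).
Proof.
move=> bf bg; have := bndD bf (bndZ (-1) bg).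
by congr bnd; apply: funext => w; rewrite mulN1r.
Qed.

Lemma bnd_sum I (s : seq I) (F : I -> T -> R) : (forall i, bnd (F i)) ->
  bnd (fun w => \sum_(i <- s) F i w).
Proof.
move=> bF; elim: s => [|i s IH].
  by have := bnd_cst 0; congr bnd; apply: funext => w; rewrite big_nil.
by have := bndD (bF i) IH; congr bnd; apply: funext => w; rewrite big_cons.
Qed.

Lemma Ex_sum I (s : seq I) (F : I -> T -> R) : (forall i, bnd (F i)) ->
  Ex P (fun w => \sum_(i <- s) F i w) = \sum_(i <- s) Ex P (F i).
Proof.
move=> bF; elim: s => [|i s IH].
  have -> : (fun w => \sum_(i <- [::]) F i w) = (fun _ => 0).
    by apply: funext => w; rewrite big_nil.
  by rewrite big_nil Ex_cst.
rewrite big_cons -IH -ExD //; last exact: bnd_sum.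
by have -> : (fun w => \sum_(j <- i :: s) F j w) = (fun w => F i w + \sum_(j <- s) F j w)
  by apply: funext => w; rewrite big_cons.
Qed.

Lemma ExB f g : bnd f -> bnd g -> Ex P (fun w => f w - g w) = Ex P f - Ex P g.
Proof.
move=> bf bg; have -> : (fun w => f w - g w) = (fun w => f w + (-1) * g w).
  by apply: funext => w; rewrite mulN1r.
by rewrite ExD ?ExZ ?mulN1r //; exact: bndZ.
Qed.

Lemma Ex_abs_le (f : T -> R) (C : R) : measurable_fun setT f -> {ae P, forall w, `|f w| <= C} ->
  `|Ex P f| <= C.
Proof.
move=> mf hC.
have bf : bnd f by split => //; exists C.
have C0 : 0 <= C.
  case: hC => N [mN PN sub].
  case: (boolp.pselect (0 <= C)) => // /negP; rewrite -ltNge => C0.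
  have sN : setT `<=` N.
    move=> w _; apply: sub => /=; apply/negP; rewrite -ltNge.
    exact: (lt_le_trans C0).
  have h1 : (P setT <= P N)%E by apply: le_measure => //; rewrite inE.
  move: h1; rewrite PN [X in (X <= _)%E](_ : _ = 1%E); last exact: probability_setT.
  by rewrite lee_fin ler10.
rewrite -lee_fin -abse_EFin Ex_EFin //.
rewrite (le_trans (le_abse_integral _ _ _)) //; first exact/measurable_EFinP.
apply: (@le_trans _ _ (\int[P]_(w in setT) (cst C%:E) w)%E).
  apply: ae_ge0_le_integral => //.
  - apply/measurable_EFinP; exact: measurableT_comp.
  - by apply: filterS hC => w hw _ /=; rewrite lee_fin.
by rewrite Pint_cst.
Qed.


Lemma bnd_indic (A : set T) : measurable A -> bnd (\1_A : T -> R).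
Proof.
move=> mA; split; first exact: measurable_indic.
by exists 1; apply: aeW => w; rewrite indicE; case: (w \in A); rewrite ?normr1 ?normr0.
Qed.

Lemma Ex_indic_int (f : T -> R) (A : set T) : measurable A -> bnd f ->
  Ex P (fun w => f w * \1_A w) = fine (\int[P]_(w in A) (f w)%:E)%E.
Proof.
move=> mA bf; rewrite ExE [in RHS]integral_mkcond [in RHS]epatch_indic.
by congr (fine (integral _ _ _)); apply: funext => w /=; rewrite EFinM.
Qed.

Lemma aux_le (Nr M xv jr : R) : 0 < Nr -> (jr / Nr - M <= xv) = (jr <= Nr * (xv + M)).
Proof. by move=> N0; rewrite lerBlDr ler_pdivrMr // mulrC. Qed.

Lemma aux_lt (Nr M xv jr : R) : 0 < Nr -> (xv < jr / Nr - M) = (Nr * (xv + M) < jr).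
Proof. by move=> N0; rewrite ltrBrDr ltr_pdivlMr // mulrC. Qed.

Lemma eps_x_zero (n : nat) (x : 'I_n -> T -> R) (eps : T -> R) (M : R) (i : 'I_n) :
  (forall j, measurable_fun setT (x j)) -> bnd eps ->
  cond_exp_zero P x eps ->
  {ae P, forall w, forall j, `|x j w| < M} ->
  Ex P (fun w => eps w * x i w) = 0.
Proof.
move=> mx beps hce hM.
have bxi : bnd (x i).
  split => //; exists M; apply: filterS hM => w /(_ i); exact: ltW.
have [_ [Ce hCe]] := beps.
set E := Ex P _.
suff hN : forall N : nat, `|E| <= Ce / N.+1%:R.
  apply/eqP; apply: contraT => E0.
  have aE : 0 < `|E| by rewrite normr_gt0.
  set N := Num.truncn (Ce / `|E|).
  have h := hN N; rewrite ler_pdivlMr ?ltr0Sn // in h.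
  have h2 : Ce / `|E| < N.+1%:R.
    by rewrite /N; apply: real_truncnS_gt; exact: num_real.
  rewrite ltr_pdivrMr // in h2.
  by move: (le_lt_trans h h2); rewrite mulrC ltxx.
move=> N.
set Nr : R := N.+1%:R.
have Nr0 : 0 < Nr by rewrite /Nr ltr0n.
set K := (Num.truncn (Nr * (2 * M))).+1.
set a := fun j : nat => j%:R / Nr - M.
set B := fun j : 'I_K => x i @^-1` `[a j, a j.+1[%classic.
have mB j : measurable (B j).
  by rewrite /B -[X in measurable X]setTI; apply: mx => //; exact: measurable_itv.
set h := fun w => \sum_(j < K) a j * \1_(B j) w.
have bh : bnd h.
  by apply: bnd_sum => j; apply: bndZ; exact: bnd_indic.
have Eh : Ex P (fun w => eps w * h w) = 0.
  have -> : (fun w => eps w * h w) =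
      (fun w => \sum_(j < K) a j * (eps w * \1_(B j) w)).
    by apply: funext => w; rewrite /h mulr_sumr; apply: eq_bigr => j _; rewrite mulrCA.
  rewrite Ex_sum; last by move=> j; apply: bndZ; apply: bndM => //; exact: bnd_indic.
  apply: big1 => j _; rewrite ExZ; last by apply: bndM => //; exact: bnd_indic.
  rewrite Ex_indic_int // hce ?mulr0 //.
  apply: sub_sigma_algebra; exists i => //.
  by exists `[a j, a j.+1[%classic => //; exact: measurable_itv.
have -> : E = Ex P (fun w => eps w * x i w - eps w * h w).
  by rewrite ExB ?Eh ?subr0 //; apply: bndM.
apply: Ex_abs_le.
  by apply: measurable_funB; apply: measurable_funM => //; case: beps; case: bh.
apply: filterS2 hM hCe => w /(_ i) hx he.
rewrite -mulrBr normrM.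
have xr : 0 <= x i w - h w /\ x i w - h w <= 1 / Nr.
  move: hx; rewrite ltr_norml => /andP[hx1 hx2].
  set u := Nr * (x i w + M).
  have u0 : 0 <= u by rewrite pmulr_rge0 // -lerBlDr sub0r ltW.
  set t := Num.truncn u.
  have tK : (t < K)%N.
    rewrite ltnS /t; apply: le_truncn; rewrite ler_pM2l //.
    by rewrite mulr2n mulrDl mul1r lerD2r ltW.
  have hB (j : 'I_K) : \1_(B j) w = (j == t :> nat)%:R.
    rewrite indicE; congr (_%:R).
    have -> : (w \in B j) = (a j <= x i w < a j.+1).
      by apply/idP/idP => [/set_mem|hh]; [|apply/mem_set]; rewrite /B /= ?in_itv. 
    by rewrite /a aux_le // aux_lt // eq_sym /t truncn_eq.
  have hE : h w = a t.
    rewrite /h (bigD1 (Ordinal tK)) //= hB eqxx mulr1 big1 ?addr0 // => j hj.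
    by rewrite hB; move: hj; rewrite -val_eqE /= => /negbTE ->; rewrite mulr0.
  have [ut1 ut2] : t%:R <= u /\ u < t.+1%:R by apply/andP; apply: truncn_itv.
  have eq : x i w - h w = (u - t%:R) / Nr.
    by rewrite hE /a /u; field; rewrite gt_eqF.
  rewrite eq; split; first by rewrite divr_ge0 // subr_ge0.
  rewrite ler_pM2r ?invr_gt0 //; rewrite -natr1 in ut2; lra.
rewrite -[Ce / Nr]/(Ce * Nr^-1) -div1r; apply: ler_pM => //.
by rewrite ger0_norm; case: xr.
Qed.

End Integ.

Section Helpers.
Context (d : measure_display) (T : measurableType d) (R : realType)
  (P : probability T R) (n : nat) (x : 'I_n -> T -> R).

Lemma bnd_ip (b : 'I_n -> R) : (forall j, bnd P (x j)) -> bnd P (ip x b).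
Proof. by move=> bx; apply: bnd_sum => j; apply: bndZ. Qed.

Lemma ipD (b c : 'I_n -> R) w : ip x (fun j => b j + c j) w = ip x b w + ip x c w.
Proof. by rewrite /ip -big_split; apply: eq_bigr => j _; rewrite mulrDl. Qed.

Lemma ipB (b c : 'I_n -> R) w : ip x (fun j => b j - c j) w = ip x b w - ip x c w.
Proof. by rewrite /ip -sumrB; apply: eq_bigr => j _; rewrite mulrBl. Qed.

Lemma ip_e (b : 'I_n -> R) (t : R) i w :
  ip x (fun j => b j + t * (j == i)%:R) w = ip x b w + t * x i w.
Proof.
rewrite ipD; congr (_ + _); rewrite /ip (bigD1 i) //= eqxx mulr1 big1 ?addr0 //.
by move=> j /negbTE ->; rewrite mulr0 mul0r.
Qed.

Lemma sq_expand (f g : T -> R) (a : R) : bnd P f -> bnd P g ->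
  Ex P (fun w => (f w + a * g w) ^+ 2) =
  Ex P (fun w => f w ^+ 2) + 2 * a * Ex P (fun w => f w * g w)
  + a ^+ 2 * Ex P (fun w => g w ^+ 2).
Proof.
move=> bf bg.
have -> : (fun w => (f w + a * g w) ^+ 2) = (fun w => (f w ^+ 2 + (2 * a) * (f w * g w))
   + a ^+ 2 * (g w ^+ 2)).
  by apply: funext => w; ring.
have bf2 : bnd P (fun w => f w ^+ 2) by apply: (bndM bf bf).
have bg2 : bnd P (fun w => g w ^+ 2) by apply: (bndM bg bg).
have bfg : bnd P (fun w => f w * g w) by apply: (bndM bf bg).
rewrite ExD; last 2 first.
- by apply: bndD => //; apply: bndZ.
- exact: bndZ.
by rewrite ExD ?ExZ //; apply: bndZ.
Qed.


Lemma ExN (f : T -> R) : bnd P f -> Ex P (fun w => - f w) = - Ex P f.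
Proof.
move=> bf; rewrite -mulN1r -ExZ //; congr Ex; apply: funext => w; by rewrite mulN1r.
Qed.

Lemma bndN (f : T -> R) : bnd P f -> bnd P (fun w => - f w).
Proof.
move=> bf; have := bndZ (-1) bf; congr bnd; apply: funext => w; by rewrite mulN1r.
Qed.

Lemma sum_delta (i : 'I_n) (G : 'I_n -> R) : \sum_j (j == i)%:R * G j = G i.
Proof.
rewrite (bigD1 i) //= eqxx mul1r big1 ?addr0 // => j /negbTE ->; by rewrite mul0r.
Qed.

Lemma sum_ext (F : {set 'I_n}) (G : 'I_n -> R) :
  (forall j, j \notin F -> G j = 0) -> \sum_(j in F) G j = \sum_j G j.
Proof. by move=> h; rewrite big_mkcond; apply: eq_bigr => j _; case: ifP => // /negbT /h ->. Qed.

Lemma quadF (F : {set 'I_n}) (rho L : R) :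
  (forall a, eigenvalue (SigmaF P x F) a -> rho <= a <= L) ->
  (forall i j, Sigma P x i j = Sigma P x j i) ->
  forall v : 'I_n -> R, (forall j, j \notin F -> v j = 0) ->
  rho * \sum_j v j ^+ 2 <= \sum_i \sum_j v i * v j * Sigma P x i j
  <= L * \sum_j v j ^+ 2.
Proof.
move=> heig Ssym v vF.
have Asym : (SigmaF P x F)^T = SigmaF P x F.
  by apply/matrixP => a b; rewrite !mxE covarianceC.
set u : 'rV[R]_#|F| := \row_a v (enum_val a).
have := quad_bounds Asym heig u.
have e1 : (u *m u^T) 0 0 = \sum_j v j ^+ 2.
  rewrite mxE -(sum_ext (F := F)); last by move=> j /vF ->; rewrite expr0n.
  by rewrite [RHS]big_enum_val; apply: eq_bigr => a _; rewrite !mxE.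
have e2 : (u *m SigmaF P x F *m u^T) 0 0 =
    \sum_i \sum_j v i * v j * Sigma P x i j.
  rewrite mxE -(sum_ext (F := F)); last first.
    by move=> j /vF ->; apply: big1 => k _; rewrite !mul0r.
  rewrite [RHS]big_enum_val exchange_big /=.
  rewrite -(sum_ext (F := F)); last first.
    by move=> j /vF ->; apply: big1 => k _; rewrite mulr0 mul0r.
  rewrite [RHS]big_enum_val; apply: eq_bigr => b _.
  rewrite mxE big_distrl /=; apply: eq_bigr => a _.
  by rewrite !mxE mulrAC.
by rewrite e1 e2.
Qed.

End Helpers.

Theorem mainTheorem9 (d : measure_display) (T : measurableType d) (R : realType)
  (P : probability T R) (n : nat)
  (x : 'I_n -> T -> R) (y : T -> R) (bstar : 'I_n -> R) (rho L M : R)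
  (S : {set 'I_n}) (bS : 'I_n -> R) :
  (forall j, measurable_fun setT (x j)) ->
  measurable_fun setT y ->
  (forall j, 'E_P[x j]%E = 0%E) ->
  cond_exp_zero P x (fun w => y w - ip x bstar w) ->
  0 < rho -> rho <= L ->
  (forall F : {set 'I_n}, #|F| = #|supp bstar| ->
     forall a, eigenvalue (SigmaF P x F) a -> rho <= a <= L) ->
  (forall F : {set 'I_n}, #|F| = #|supp bstar| -> muF P x F < 1) ->
  {ae P, forall w, `|y w| < 1} ->
  {ae P, forall w, forall j, `|x j w| < M} ->
  S \proper supp bstar ->
  is_betaS P x y S bS ->
  inf [set r | exists (alpha : R) (i : 'I_n), i \in supp bstar :\: S /\
        r = Ex P (fun w => (ip x bS w + alpha * bstar i * x i w - y w) ^+ 2)]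
  <= Ex P (fun w => (ip x bS w - y w) ^+ 2)
     - (#|supp bstar|%:R - #|S|%:R)^-1 * (rho / L)
       * Ex P (fun w => (ip x (fun j => bstar j - bS j) w) ^+ 2).
Proof.
move=> mx my Ex0 hce rho0 rhoL heig _ hy hx SS [suppbS bSopt].
set Sst := supp bstar.
have bx j : bnd P (x j).
  split => //; exists M; apply: filterS hx => w /(_ j); exact: ltW.
have byy : bnd P y.
  split => //; exists 1; apply: filterS hy => w; exact: ltW.
set Sig := fun i j => Ex P (fun w => x i w * x j w).
have SigE i j : Sigma P x i j = Sig i j.
  rewrite /Sigma mxE /Sig /Ex; congr fine.
  rewrite covariance.unlock /= !Ex0 /=; congr expectation.
  by apply: funext => w; rewrite /GRing.mul /= !subr0.
have SigC i j : Sig i j = Sig j i.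
  by rewrite /Sig; congr Ex; apply: funext => w; rewrite mulrC.
set f := fun w => ip x bS w - y w.
have bf : bnd P f by apply: bndB => //; exact: bnd_ip.
set g := fun i => Ex P (fun w => f w * x i w).
set eps := fun w => y w - ip x bstar w.
have beps : bnd P eps by apply: bndB => //; exact: bnd_ip.
have epsx i : Ex P (fun w => eps w * x i w) = 0 := eps_x_zero i mx beps hce hx.
set De := fun j => bstar j - bS j.
set Q := Ex P (fun w => (ip x De w) ^+ 2).
have expand i a : Ex P (fun w => (ip x bS w + a * x i w - y w) ^+ 2) =
    Ex P (fun w => f w ^+ 2) + 2 * a * g i + a ^+ 2 * Sig i i.
  have -> : (fun w => (ip x bS w + a * x i w - y w) ^+ 2) =
      (fun w => (f w + a * x i w) ^+ 2).
    by apply: funext => w; rewrite /f addrAC.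
  by rewrite sq_expand.
have riskE b : risk P x y b = Ex P (fun w => (ip x b w - y w) ^+ 2).
  by rewrite /risk; congr Ex; apply: funext => w; rewrite -opprB sqrrN.
have Sig_ge0 i : 0 <= Sig i i by apply: Ex_ge0 => w; rewrite -expr2 sqr_ge0.
have gS i : i \in S -> g i = 0.
  move=> iS.
  set c := Sig i i; set t := - g i / (c + 1).
  have c0 : 0 <= c := Sig_ge0 i.
  have c1 : c + 1 != 0 by rewrite gt_eqF // ltr_wpDl.
  have hb := bSopt (fun j => bS j + t * (j == i)%:R).
  have : Ex P (fun w => f w ^+ 2) <= Ex P (fun w => f w ^+ 2) + 2 * t * g i + t ^+ 2 * c.
    rewrite -expand; move: hb; rewrite !riskE.
    have -> : (fun w => (ip x (fun j => bS j + t * (j == i)%:R) w - y w) ^+ 2)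
       = (fun w => (ip x bS w + t * x i w - y w) ^+ 2).
      by apply: funext => w; rewrite ip_e.
    apply; apply/fintype.subsetP => j; rewrite /supp inE => hj.
    have [ji|ji] := eqVneq j i; first by rewrite ji.
    move: hj; rewrite (negbTE ji) mulr0 addr0 => hj.
    by apply: (fintype.subsetP suppbS); rewrite /supp inE.
  rewrite -addrA lerDl => h.
  have e : (c + 1) ^+ 2 * (2 * t * g i + t ^+ 2 * c) = - (g i ^+ 2 * (c + 2)).
    by rewrite /t; field.
  have h2 : 0 <= - (g i ^+ 2 * (c + 2)) by rewrite -e mulr_ge0 // sqr_ge0.
  have h3 : g i ^+ 2 <= 0 by nra.
  by apply/eqP; rewrite -sqrf_eq0 eq_le h3 sqr_ge0.
have fE w : f w = - ip x De w - eps w.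
  by rewrite /f /eps /De ipB; ring.
have bxx i j : bnd P (fun w => x i w * x j w) by apply: bndM.
have gE i : g i = - \sum_j De j * Sig j i.
  rewrite /g.
  have -> : (fun w => f w * x i w) =
      (fun w => - (\sum_j De j * (x j w * x i w)) - eps w * x i w).
    apply: funext => w; rewrite fE mulrBl mulNr /ip big_distrl /=.
    by congr (- _ - _); apply: eq_bigr => j _; rewrite mulrA.
  rewrite ExB; last 2 first.
  - by apply: bndN; apply: bnd_sum => j; apply: bndZ.
  - exact: bndM.
  rewrite epsx subr0 ExN; last by apply: bnd_sum => j; apply: bndZ.
  by rewrite Ex_sum; [congr (- _); apply: eq_bigr => j _; rewrite ExZ | move=> j; apply: bndZ].
have QE : Q = \sum_i \sum_j De i * De j * Sig i j.
  rewrite /Q.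
  have -> : (fun w => (ip x De w) ^+ 2) =
      (fun w => \sum_i \sum_j De i * De j * (x i w * x j w)).
    apply: funext => w; rewrite expr2 /ip big_distrl; apply: eq_bigr => i _.
    by rewrite big_distrr; apply: eq_bigr => j _ /=; ring.
  rewrite Ex_sum; last by move=> i; apply: bnd_sum => j; apply: bndZ.
  apply: eq_bigr => i _; rewrite Ex_sum; last by move=> j; apply: bndZ.
  by apply: eq_bigr => j _; rewrite ExZ.
have SSst : S \subset Sst by apply: proper_sub.
have bS0 i : i \notin S -> bS i = 0.
  move=> iS; apply/eqP; apply: contraNT iS => h.
  by apply: (fintype.subsetP suppbS); rewrite /supp inE.
have bstar0 i : i \notin Sst -> bstar i = 0.
  by rewrite /Sst /supp inE negbK => /eqP.
have QD : Q = - \sum_(i in Sst :\: S) bstar i * g i.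
  have -> : Q = - \sum_i De i * g i.
    rewrite QE -sumrN; apply: eq_bigr => i _.
    rewrite gE mulrN opprK mulr_sumr; apply: eq_bigr => j _.
    by rewrite SigC mulrA.
  congr (- _); rewrite [LHS](bigID (mem (Sst :\: S))) /= [X in _ + X]big1 ?addr0.
    apply: eq_bigr => i; rewrite inE => /andP[iS _].
    by rewrite /De bS0 // subr0.
  move=> i; rewrite inE negb_and negbK => /orP[iS|iSst].
    by rewrite gS // mulr0.
  have iS : i \notin S by apply: contra iSst; apply: (fintype.subsetP SSst).
  by rewrite /De bS0 // bstar0 // subr0 mul0r.
have quad v : (forall j, j \notin Sst -> v j = 0) ->
    rho * \sum_j v j ^+ 2 <= \sum_i \sum_j v i * v j * Sig i j <= L * \sum_j v j ^+ 2.
  move=> hv.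
  have Ssym i j : Sigma P x i j = Sigma P x j i by rewrite !SigE SigC.
  have := quadF (heig Sst erefl) Ssym hv.
  have -> : \sum_i \sum_j v i * v j * Sigma P x i j = \sum_i \sum_j v i * v j * Sig i j.
    by apply: eq_bigr => i _; apply: eq_bigr => j _; rewrite SigE.
  by [].
have diag i : i \in Sst -> rho <= Sig i i <= L.
  move=> iS.
  have := quad (fun j => (j == i)%:R).
  have -> : \sum_j (j == i)%:R ^+ 2 = 1 :> R.
    by rewrite (bigD1 i) //= eqxx expr1n big1 ?addr0 // => j /negbTE ->; rewrite expr0n.
  have -> : \sum_i0 \sum_j (i0 == i)%:R * (j == i)%:R * Sig i0 j = Sig i i.
    rewrite -[RHS](sum_delta i (fun i0 => Sig i0 i)); apply: eq_bigr => i0 _.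
    rewrite -(sum_delta i (fun j => Sig i0 j)) mulr_sumr; apply: eq_bigr => j _.
    by rewrite mulrA.
  rewrite !mulr1; apply.
  by move=> j jS; case: eqP => // ji; move: jS; rewrite ji iS.
have Qlow : rho * \sum_j De j ^+ 2 <= Q.
  have := quad De; rewrite -QE; case/(_ _)/andP => //.
  move=> j jS; rewrite /De bstar0 // bS0 ?subr0 //.
  by apply: contra jS; apply: (fintype.subsetP SSst).
set D := Sst :\: S.
have [i1 i1D] : exists i1, i1 \in D.
  by case/properP: SS => _ [i1 h1 h2]; exists i1; rewrite inE h1 h2.
set m := #|Sst|%:R - #|S|%:R.
have cardD : #|D|%:R = m :> R.
  rewrite /D cardsD (finset.setIidPr SSst) natrB //; exact: subset_leq_card.
have m0 : 0 < m.
  by rewrite -cardD ltr0n; apply/card_gt0P; exists i1.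
have Dprop i : i \in D -> [/\ i \in Sst, i \notin S, rho <= Sig i i, Sig i i <= L
    & bstar i != 0].
  rewrite inE => /andP[iS iSst]; have /andP[h1 h2] := diag i iSst.
  by split => //; move: iSst; rewrite /Sst /supp inE.
set G := fun i => g i ^+ 2 / Sig i i.
have [i0 i0D i0max] := @arg_maxP _ R _ i1 (mem D) G i1D.
have L0 : 0 < L by apply: lt_le_trans rhoL.
have term i : i \in D -> - (bstar i * g i) <= rho / 2 * De i ^+ 2 + L / (2 * rho) * G i.
  move=> iD; have [iSst iS s1 s2 b0] := Dprop i iD.
  set s := Sig i i; set b := bstar i; set gi := g i.
  have s0 : 0 < s by apply: lt_le_trans s1.
  set c := rho * s / L.
  have c0 : 0 < c by rewrite /c divr_gt0 // mulr_gt0.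
  have cr : c <= rho by rewrite /c ler_pdivrMr // ler_pM2l.
  have h1 : 0 <= (c * b + gi) ^+ 2 / (2 * c) by rewrite divr_ge0 ?sqr_ge0 // mulr_ge0 // ltW.
  have e1 : (c * b + gi) ^+ 2 / (2 * c) = c / 2 * b ^+ 2 + b * gi + gi ^+ 2 / (2 * c).
    by field; rewrite gt_eqF.
  have e2 : gi ^+ 2 / (2 * c) = L / (2 * rho) * (gi ^+ 2 / s).
    by rewrite /c; field; rewrite !gt_eqF.
  have hDe : De i = b by rewrite /De bS0 // subr0.
  rewrite hDe /G -/s -/gi -e2.
  have h2 : c / 2 * b ^+ 2 <= rho / 2 * b ^+ 2.
    apply: ler_wpM2r; first exact: sqr_ge0.
    by rewrite ler_pM2r // invr_gt0 ltr0n.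
  rewrite e1 in h1; lra.
have [i0Sst i0S s01 s02 b00] := Dprop i0 i0D.
have s00 : 0 < Sig i0 i0 by apply: lt_le_trans s01.
have G0 : 0 <= G i0 by rewrite divr_ge0 ?sqr_ge0 // ltW.
have Qup : Q <= rho / 2 * \sum_j De j ^+ 2 + L / (2 * rho) * (m * G i0).
  rewrite QD -sumrN.
  apply: (le_trans (ler_sum _ term)).
  rewrite big_split /= -!mulr_sumr; apply: lerD.
    rewrite ler_pM2l ?divr_gt0 //.
    rewrite [leRHS](bigID (mem D)) /= lerDl; apply: sumr_ge0 => j _; exact: sqr_ge0.
  rewrite ler_pM2l ?divr_gt0 ?mulr_gt0 //.
  rewrite -cardD mulr_natl -sumr_const; apply: ler_sum => j jD; exact: i0max.
have key : m^-1 * (rho / L) * Q <= G i0.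
  have Q2 : Q <= L / rho * m * G i0.
    have h : Q <= Q / 2 + L / (2 * rho) * (m * G i0).
      apply: le_trans Qup _; rewrite lerD2r.
      by rewrite mulrAC ler_pM2r.
    have -> : L / rho * m * G i0 = 2 * (L / (2 * rho) * (m * G i0)).
      by field; rewrite gt_eqF.
    lra.
  have -> : G i0 = m^-1 * (rho / L) * (L / rho * m * G i0).
    by field; rewrite !gt_eqF.
  by rewrite ler_pM2l // mulr_gt0 ?invr_gt0 ?divr_gt0.
set E := [set r | _].
have lbE : has_lbound E.
  exists 0 => r [alpha [i [_ ->]]]; apply: Ex_ge0 => w; exact: sqr_ge0.
set alpha := - g i0 / (Sig i0 i0 * bstar i0).
have Ei0 : E (Ex P (fun w => f w ^+ 2) - G i0).
  exists alpha, i0; split => //.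
  rewrite expand.
  have -> : alpha * bstar i0 = - g i0 / Sig i0 i0.
    by rewrite /alpha; field; rewrite b00 gt_eqF.
  by rewrite /G; field; rewrite gt_eqF.
apply: le_trans (ge_inf lbE Ei0) _.
by rewrite lerD2l lerN2.
Qed.
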